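(* Let $(\beta(n))_{n\in\mathbb{N}}$ be a non-increasing sequence of positive real numbers converging to $0$. Let $\tau_v(f)=\sum_{n=1}^\infty 2^{-n}f(1/2^{n-1})$ on $C(\overline{\mathbb{N}})$, let $E_m:C(\overline{\mathbb{N}})\to\mathcal{C}_m$ be the unique $\tau_v$-preserving conditional expectation onto $\mathcal{C}_m$, and define $L_\beta(f)=\sup\{\|f-E_m(f)\|_\infty/\beta(m): m\in\mathbb{N}\}$. Then $L_\beta(\varphi_n)=1/\beta(n)$ for all $n\in\mathbb{N}$.
   Context: $\mathbb{N}=\{1,2,\dots\}$, $\overline{\mathbb{N}}=\{1/2^{n-1}: n\in\mathbb{N}\}\cup\{0\}\subseteq\mathbb{R}$, and $\|\cdot\|_\infty$ is the sup norm on $C(\overline{\mathbb{N}})$. For $m\in\mathbb{N}$, $\mathcal{C}_m=\{f\in C(\overline{\mathbb{N}}): f(x)=f(1/2^{m-1})\text{ for all } x\le 1/2^{m-1}\}$, a finite-dimensional C*-subalgebra with $\mathcal{C}_1=\mathbb{C}1$; the $\mathcal{C}_m$ increase and their union is dense. A conditional expectation onto a unital C*-subalgebra $B$ is a linear map $E$ onto $B$ with $E|_B=\mathrm{id}$, $\|E(a)\|\le\|a\|$ and $E(bab')=bE(a)b'$ for $b,b'\in B$; $\tau_v$-preserving means $\tau_v\circ E=\tau_v$. For $n\in\mathbb{N}_0$, $\varphi_n:\overline{\mathbb{N}}\to\mathbb{R}$ is defined by $\varphi_n(x)=0$ if $x>1/2^{n-1}$, $\varphi_n(x)=-1$ if $x=1/2^{n-1}$,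 and $\varphi_n(x)=1$ if $x<1/2^{n-1}$. *)

(* Defs.v *)
From HB Require Import structures.
From mathcomp Require Import all_boot all_order all_algebra.
From mathcomp Require Import all_classical all_reals all_analysis.
From mathcomp Require Import complex.
Set Implicit Arguments. Unset Strict Implicit. Unset Printing Implicit Defensive.
Import Order.TTheory GRing.Theory Num.Theory.
Import numFieldTopology.Exports numFieldNormedType.Exports.
(* topology (metric of the modulus) on the complex numbers R[i], as for any numClosedFieldType *)
HB.instance Definition _ (R : rcfType) := PseudoPointedMetric.copy R[i] (R[i])^o.

Local Open Scope classical_set_scope.
Local Open Scope ring_scope.

Section Defs.
Variable R : realType.
Local Notation C := R[i].

(* the point 1/2^(m-1) of Nbar, for m in N = {1,2,...} *)
Definition pt (m : nat) : R := (2%:R ^+ m.-1)^-1.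

Definition Nbar : set R := [set x | x = 0 \/ exists2 m : nat, (0 < m)%N & x = pt m].

(* C(Nbar): complex-valued functions continuous on Nbar (only values on Nbar matter) *)
Definition CNbar : set (R -> C) := [set f | {within Nbar, continuous f}].

(* agreement on Nbar (= equality as elements of C(Nbar)) *)
Definition agree (f g : R -> C) : Prop := forall x, Nbar x -> f x = g x.

Definition Cm (m : nat) : set (R -> C) :=
  [set f | CNbar f /\ forall x, Nbar x -> x <= pt m -> f x = f (pt m)].

Definition supnorm (f : R -> C) : R := sup [set Normc.normc (f x) | x in Nbar].

Definition tau_v (f : R -> C) : C :=
  limn (fun N : nat => \sum_(1 <= n < N) (((2%:R : C)^-1) ^+ n * f (pt n))).

(* E is a map on C(Nbar); it is
   represented on representatives R -> C, hence the well-definedness clause. *)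
Definition tau_cond_exp (B : set (R -> C)) (E : (R -> C) -> (R -> C)) : Prop :=
      (forall f g, CNbar f -> CNbar g -> agree f g -> agree (E f) (E g)) /\
      (forall f, CNbar f -> B (E f)) /\
      (forall b, B b -> exists2 f, CNbar f & agree (E f) b) /\
      (forall (a : C) f g, CNbar f -> CNbar g ->
          agree (E (fun x => a * f x + g x)) (fun x => a * E f x + E g x)) /\
      (forall b, B b -> agree (E b) b) /\
      (forall f, CNbar f -> supnorm (E f) <= supnorm f) /\
      (forall b a b', B b -> CNbar a -> B b' ->
          agree (E (fun x => b x * a x * b' x)) (fun x => b x * E a x * b' x)) /\
      (forall f, CNbar f -> tau_v (E f) = tau_v f).

Definition Lbeta (beta : nat -> R) (E : nat -> (R -> C) -> (R -> C)) (f : R -> C)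
  : \bar R :=
  ereal_sup [set ((supnorm (fun x => f x - E m f x)) / beta m)%:E
            | m in [set m : nat | (0 < m)%N]].

Definition varphi (n : nat) (x : R) : C :=
  if pt n < x then 0 else if x == pt n then -1 else 1.

End Defs.

(* Main.v *)
Require Import Defs.
From HB Require Import structures.
From mathcomp Require Import all_boot all_order all_algebra.
From mathcomp Require Import all_classical all_reals all_analysis.
From mathcomp Require Import complex.
From mathcomp Require Import lra ring.
Import Order.TTheory GRing.Theory Num.Theory.
Import numFieldTopology.Exports numFieldNormedType.Exports.
Local Open Scope classical_set_scope.
Local Open Scope ring_scope.

Section S.
Variable R : realType.
Local Notation C := R[i].
Local Notation pt := (@pt R).
Local Notation Nbar := (@Nbar R).

Lemma pt_gt0 m : 0 < pt m.
Proof. by rewrite /pt invr_gt0 exprn_gt0. Qed.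

Lemma pt_le j k : (0 < j)%N -> (0 < k)%N -> (pt j <= pt k) = (k <= j)%N.
Proof.
move=> j0 k0; rewrite /pt lef_pV2 ?posrE ?exprn_gt0 // ler_eXn2l ?ltr1n //.
by case: j j0 => // j _; case: k k0.
Qed.

Lemma pt_lt j k : (0 < j)%N -> (0 < k)%N -> (pt j < pt k) = (k < j)%N.
Proof. by move=> j0 k0; rewrite ltNge pt_le // -ltnNge. Qed.

Lemma pt_inj j k : (0 < j)%N -> (0 < k)%N -> pt j = pt k -> j = k.
Proof.
move=> j0 k0 e; apply/eqP; rewrite eqn_leq -pt_le // -pt_le // e lexx //.
Qed.

Lemma ptS k : (0 < k)%N -> pt k.+1 * 2 = pt k.
Proof.
case: k => // k _; rewrite /pt /= exprS invfM mulrC mulrA mulfV ?mul1r //.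
Qed.

Lemma Nbar_ge0 x : Nbar x -> 0 <= x.
Proof. by case=> [->//|[m _ ->]]; exact/ltW/pt_gt0. Qed.

Lemma pt_isol k y : (0 < k)%N -> Nbar y -> `|pt k - y| < pt k / 4 -> y = pt k.
Proof.
move=> k0 [->|[j j0 ->]].
  by rewrite subr0 gtr0_norm ?pt_gt0 // => H; have := pt_gt0 k; lra.
have [jk|kj|->//] := ltngtP j k.
- have h : pt k * 2 <= pt j.
    have k1 : (0 < k.-1)%N by rewrite -subn1 subn_gt0 (leq_trans _ jk).
    have e : k = (k.-1).+1 by rewrite prednK.
    by rewrite e ptS // pt_le // -ltnS -e.
  have hk := pt_gt0 k.
  rewrite ler0_norm ?subr_le0; last by lra.
  move=> H; exfalso; lra.
- have h : pt j * 2 <= pt k.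
    by rewrite -(ptS _ k0) ler_pM2r // pt_le.
  have hk := pt_gt0 j.
  rewrite ger0_norm ?subr_ge0; last by lra.
  move=> H; exfalso; lra.
Qed.

Lemma cvg_within_loc (f : R -> C) (A : set R) x eps : 0 < eps ->
  (forall y, A y -> `|x - y| < eps -> f y = f x) -> f @ within A (nbhs x) --> f x.
Proof.
move=> e0 H; apply: cvg_near_cst.
rewrite near_withinE; apply/nbhs_ballP; exists eps => //= y hy Ay.
by apply: H.
Qed.

Lemma CNbar_loc (f : R -> C) N : (forall x, Nbar x -> x <= pt N -> f x = f 0) -> CNbar f.
Proof.
move=> H; rewrite /CNbar; apply/subspace_continuousP => x Nx.
case: (Nx) => [->|[k k0 ->]].
- apply: (@cvg_within_loc _ _ _ (pt N)); first exact: pt_gt0.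
  move=> y Ny; rewrite sub0r normrN ger0_norm ?Nbar_ge0 // => hy.
  by apply: H => //; exact: ltW.
- apply: (@cvg_within_loc _ _ _ (pt k / 4)); first by have := pt_gt0 k; lra.
  by move=> y Ny hy; rewrite (pt_isol _ _ k0 Ny hy).
Qed.

Lemma hcvg : (fun N => ((2:C)^-1) ^+ N) @ \oo --> (0:C).
Proof.
have hR : (fun N => ((2:R)^-1) ^+ N) @ \oo --> (0:R).
  by apply: cvg_expr; rewrite ger0_norm // invf_lt1 // ltr1n.
suff : (fun N => ((2:C^o)^-1) ^+ N) @ \oo --> (0:C^o) by [].
apply/cvgrPdist_lt => e e0.
move: (e0); rewrite ltcE /= => /andP[/eqP Ie Re0].
move/cvgrPdist_lt : hR => /(_ (complex.Re e) Re0).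
apply: filterS => N; rewrite !sub0r !normrN.
have -> : (2:C^o)^-1 ^+ N = (((2:R)^-1 ^+ N)%:C)%C.
  by rewrite rmorphXn rmorphV ?unitfE // rmorph_nat.
rewrite ger0_norm // ger0_norm ?lecR //.
by rewrite ltcE /= Ie eqxx.
Qed.

Local Notation varphi := (@varphi R).
Definition delta (k : nat) (x : R) : C := if x == pt k then 1 else 0.

Lemma Nbar_pt k : (0 < k)%N -> Nbar (pt k).
Proof. by move=> k0; right; exists k. Qed.

Lemma varphi_lt n x : x < pt n -> varphi n x = 1.
Proof. by move=> h; rewrite /Defs.varphi (lt_gtF h) (lt_eqF h). Qed.
Lemma varphi_gt n x : pt n < x -> varphi n x = 0.
Proof. by move=> h; rewrite /Defs.varphi h. Qed.
Lemma varphi_pt n : varphi n (pt n) = -1.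
Proof. by rewrite /Defs.varphi ltxx eqxx. Qed.
Lemma delta_out k x : x < pt k -> delta k x = 0.
Proof. by move=> h; rewrite /delta (lt_eqF h). Qed.

Lemma CNbar_varphi n : (0 < n)%N -> CNbar (varphi n).
Proof.
move=> n0; apply: (@CNbar_loc _ n.+1) => x Nx hx.
by rewrite !varphi_lt ?pt_gt0 // (le_lt_trans hx) // pt_lt.
Qed.

Lemma Cm_cst m (c : C) : Cm m (fun _ => c).
Proof. by split => //; apply: (@CNbar_loc _ 1). Qed.

Lemma Cm_varphi m n : (0 < n)%N -> (n < m)%N -> Cm m (varphi n).
Proof.
move=> n0 nm; split; first exact: CNbar_varphi.
have m0 : (0 < m)%N by apply: leq_trans nm.
by move=> x Nx hx; rewrite !varphi_lt // ?(le_lt_trans hx) // pt_lt.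
Qed.

Lemma Cm_delta m k : (0 < k)%N -> (k < m)%N -> Cm m (delta k).
Proof.
move=> k0 km; have m0 : (0 < m)%N by apply: leq_trans km.
split.
  apply: (@CNbar_loc _ k.+1) => x Nx hx.
  by rewrite !delta_out ?pt_gt0 // (le_lt_trans hx) // pt_lt.
by move=> x Nx hx; rewrite !delta_out // ?(le_lt_trans hx) // pt_lt.
Qed.

Local Notation h := ((2:C)^-1).
Arguments CNbar_varphi {n}.
Arguments Cm_delta {m k}.
Arguments Nbar_pt {k}.

Lemma psum_tail (u : nat -> C) M v : (0 < M)%N -> (forall k, (M <= k)%N -> u k = v) ->
  forall N, (M <= N)%N -> \sum_(1 <= k < N) h^+k * u k =
    \sum_(1 <= k < M) h^+k * u k + v * 2 * (h^+M - h^+N).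
Proof.
move=> M0 hu; elim=> [|N IH]; first by rewrite leqn0 => /eqP E; rewrite E in M0.
rewrite leq_eqVlt => /orP[/eqP <-|hMN]; first by rewrite subrr mulr0 addr0.
have M1 : (M <= N)%N by [].
rewrite big_nat_recr /=; last exact: leq_trans M0 M1.
rewrite IH // hu // exprS -addrA; congr (_ + _).
have h2 : h * 2 = 1 by rewrite mulVf // pnatr_eq0.
have -> : v * 2 * (h ^+ M - h * h ^+ N) = v * 2 * h ^+ M - v * (h * 2) * h ^+ N by ring.
rewrite h2; ring.
Qed.

Lemma E_varphi (E' : (R -> C) -> (R -> C)) m n : (0 < m)%N -> (m <= n)%N ->
  tau_cond_exp (Cm m) E' -> agree (E' (varphi n)) (fun _ => 0).
Proof.
move=> m0 mn [wd [rng [_ [lin [idE [nrm [bim tau]]]]]]].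
have n0 : (0 < n)%N := leq_trans m0 mn.
have Cv := CNbar_varphi n0.
set g := E' (varphi n).
have [_ gc] : Cm m g := rng _ Cv.
have gk : forall k, (0 < k)%N -> (k < m)%N -> g (pt k) = 0.
  move=> k k0 km.
  have kn : (k < n)%N := leq_trans km mn.
  have := bim (delta k) (varphi n) (fun _ => 1) (Cm_delta k0 km) Cv (Cm_cst m 1)
    (pt k) (Nbar_pt k0).
  rewrite /delta eqxx mul1r mulr1 -/g => <-.
  have Cp : CNbar (fun x => delta k x * varphi n x * 1).
    apply: (@CNbar_loc _ k.+1) => x Nx hx.
    by rewrite !delta_out ?mul0r ?pt_gt0 // (le_lt_trans hx) // pt_lt.
  have Ap : agree (fun x => delta k x * varphi n x * 1) (fun _ => 0).
    move=> x Nx; rewrite /delta; case: eqP => [->|_]; last by rewrite !mul0r.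
    by rewrite varphi_gt ?mulr0 ?mul0r // pt_lt.
  rewrite (wd _ _ Cp (Cm_cst m 0).1 Ap (pt k) (Nbar_pt k0)).
  exact: idE (Cm_cst m 0) _ (Nbar_pt k0).
set c := g (pt m).
have gt : forall k, (m <= k)%N -> g (pt k) = c.
  move=> k mk; apply: gc; first exact: Nbar_pt (leq_trans m0 mk).
  by rewrite pt_le // (leq_trans m0 mk).
have Sg : forall N, (m <= N)%N ->
    \sum_(1 <= k < N) h^+k * g (pt k) = c * 2 * (h^+m - h^+N).
  move=> N mN; rewrite (@psum_tail (fun k => g (pt k)) m c m0 gt N mN).
  rewrite big_nat big1 ?add0r // => k /andP[k0 km]; by rewrite gk ?mulr0.
have Sv : forall N, (n < N)%N ->
    \sum_(1 <= k < N) h^+k * varphi n (pt k) = - (2 * h^+N).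
  move=> N nN.
  have hv : forall k, (n.+1 <= k)%N -> varphi n (pt k) = 1.
    by move=> k nk; rewrite varphi_lt // pt_lt // (leq_trans _ nk).
  rewrite (@psum_tail (fun k => varphi n (pt k)) n.+1 1 _ hv N nN) //.
  rewrite big_nat_recr //= varphi_pt big_nat big1 ?add0r; last first.
    by move=> k /andP[k0 kn]; rewrite varphi_gt ?mulr0 // pt_lt.
  by rewrite exprS; field; rewrite ?pnatr_eq0.
have L1 : (fun N => \sum_(1 <= k < N) h^+k * g (pt k)) @ \oo --> (c * 2 * h^+m).
  suff : (fun N => \sum_(1 <= k < N) h^+k * g (pt k) : C^o) @ \oo --> (c * 2 * h^+m : C^o) by [].
  have e1 : {near \oo, (fun N => c * 2 * (h^+m - h^+N) : C^o) =1
      (fun N => \sum_(1 <= k < N) h^+k * g (pt k))}.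
    by exists m => // j /= mj; rewrite Sg.
  apply: cvg_trans (near_eq_cvg e1) _.
  suff : (fun N => c * 2 * (h^+m - h^+N) : C^o) @ \oo --> (c * 2 * (h^+m - 0) : C^o).
    by rewrite subr0.
  by apply: cvgMl_tmp; apply: cvgB; [exact: cvg_cst | exact: hcvg].
have L2 : (fun N => \sum_(1 <= k < N) h^+k * varphi n (pt k)) @ \oo --> (0:C).
  suff : (fun N => \sum_(1 <= k < N) h^+k * varphi n (pt k) : C^o) @ \oo --> (0 : C^o) by [].
  have e1 : {near \oo, (fun N => - (2 * h^+N) : C^o) =1
      (fun N => \sum_(1 <= k < N) h^+k * varphi n (pt k))}.
    by exists n.+1 => // j /= mj; rewrite Sv.
  apply: cvg_trans (near_eq_cvg e1) _.
  suff : (fun N => - (2 * h^+N) : C^o) @ \oo --> (- (2 * 0) : C^o).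
    by rewrite mulr0 oppr0.
  by apply: cvgN; apply: cvgMl_tmp; exact: hcvg.
have c0 : c = 0.
  have hC : hausdorff_space C^o := @norm_hausdorff _ C^o.
  have T1 : tau_v g = c * 2 * h^+m by exact: (cvg_lim hC L1).
  have T2 : tau_v (varphi n) = 0 by exact: (cvg_lim hC L2).
  have := tau _ Cv; rewrite -/g T1 T2.
  by move/eqP; rewrite !mulf_eq0 expf_eq0 invr_eq0 pnatr_eq0 /= andbF !orbF => /eqP.
move=> x [->|[k k0 ->]].
  by rewrite gc ?c0 //; [left | exact/ltW/pt_gt0].
have [km|mk] := ltnP k m; first by rewrite gk.
by rewrite gt.
Qed.

Arguments E_varphi {E' m n}.
Arguments Cm_varphi {m n}.
Lemma supnorm_eq (f : R -> C) a : (exists2 x, Nbar x & Normc.normc (f x) = a) ->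
  (forall x, Nbar x -> Normc.normc (f x) <= a) -> supnorm f = a.
Proof.
move=> [x0 Nx0 fx0] ub; rewrite /supnorm; apply/le_anti/andP; split.
  by apply: ge_sup; [exists a, x0 | move=> _ [x Nx <-]; apply: ub].
apply: ub_le_sup; last by exists x0.
by exists a => _ [x Nx <-]; apply: ub.
Qed.

Lemma Nbar0 : Nbar 0. Proof. by left. Qed.

Lemma key1 (E' : (R -> C) -> (R -> C)) m n : (0 < m)%N -> (m <= n)%N ->
  tau_cond_exp (Cm m) E' -> supnorm (fun x => varphi n x - E' (varphi n) x) = 1.
Proof.
move=> m0 mn hE; have n0 : (0 < n)%N := leq_trans m0 mn.
have Ez := E_varphi m0 mn hE.
apply: supnorm_eq.
  exists 0; first exact: Nbar0.
  rewrite Ez; last exact: Nbar0.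
  by rewrite subr0 varphi_lt ?pt_gt0 // Normc.normc1.
move=> x Nx; rewrite Ez // subr0 /Defs.varphi.
case: ifP => _; first by rewrite Normc.normc0.
by case: ifP => _; rewrite ?normcN Normc.normc1.
Qed.

Arguments key1 {E' m n}.
Lemma key2 (E' : (R -> C) -> (R -> C)) m n : (0 < n)%N -> (n < m)%N ->
  tau_cond_exp (Cm m) E' -> supnorm (fun x => varphi n x - E' (varphi n) x) = 0.
Proof.
move=> n0 nm [_ [_ [_ [_ [idE _]]]]].
have Ez := idE _ (Cm_varphi n0 nm).
apply: supnorm_eq.
  exists 0; first exact: Nbar0.
  rewrite Ez; last exact: Nbar0.
  by rewrite subrr Normc.normc0.
by move=> x Nx; rewrite Ez // subrr Normc.normc0.
Qed.

Arguments key2 {E' m n}.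
Lemma main (beta : nat -> R)
  (beta_pos : forall n : nat, (0 < n)%N -> 0 < beta n)
  (beta_noninc : forall n m : nat, (0 < n)%N -> (n <= m)%N -> beta m <= beta n)
  (E : nat -> (R -> R[i]) -> (R -> R[i]))
  (E_ce : forall m : nat, (0 < m)%N -> tau_cond_exp (Cm (R:=R) m) (E m)) :
  forall n : nat, (0 < n)%N -> Lbeta beta E (varphi n) = ((beta n)^-1)%:E.
Proof.
move=> n n0; rewrite /Lbeta; apply/le_anti/andP; split.
  apply: ge_ereal_sup => _ [m m0 <-]; rewrite lee_fin.
  have [mn|nm] := leqP m n.
    rewrite (key1 m0 mn (E_ce m m0)) mul1r lef_pV2 ?posrE ?beta_pos //.
    exact: beta_noninc.
  by rewrite (key2 n0 nm (E_ce m m0)) mul0r invr_ge0 ltW ?beta_pos.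
apply: ereal_sup_ubound; exists n => //.
by rewrite (key1 n0 (leqnn n) (E_ce n n0)) mul1r.
Qed.
End S.

Theorem lemma3p8 (R : realType) (beta : nat -> R)
  (beta_pos : forall n : nat, (0 < n)%N -> 0 < beta n)
  (beta_noninc : forall n m : nat, (0 < n)%N -> (n <= m)%N -> beta m <= beta n)
  (beta_cvg0 : beta @ \oo --> (0 : R))
  (E : nat -> (R -> R[i]) -> (R -> R[i]))
  (E_ce : forall m : nat, (0 < m)%N -> tau_cond_exp (Cm (R:=R) m) (E m)) :
  forall n : nat, (0 < n)%N -> Lbeta beta E (varphi (R:=R) n) = ((beta n)^-1)%:E.
Proof. exact: (@main R beta beta_pos beta_noninc E E_ce). Qed.
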